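(* Let $M=\mathbb{S}^1\times[-\rho,\rho]$ carry a metric of the form $ds^2=d\sigma^2+f(\theta,\sigma)^2d\theta^2$, with $\theta\in\mathbb{S}^1=[0,2\pi)$, $\sigma\in[-\rho,\rho]$ and $f>0$ smooth. Suppose there are constants $\alpha>0$ and $C\ge 0$ such that $R\ge-\alpha$ on $M$ and $|k_g|\le C$ on $\partial M$. For $s\in[-\rho,\rho]$ let $L_s=\int_0^{2\pi}f(\theta,s)\,d\theta$ be the length of the parallel $\mathbb{S}^1\times\{s\}$. Then for all $s,q\in[-\rho,\rho]$, $$L_s e^{-2\rho(\alpha\rho+C)}\le L_q\le L_s e^{2\rho(\alpha\rho+C)}.$$
   Context: $R$ is the scalar curvature (twice the Gauss curvature) of the metric and $k_g$ the geodesic curvature of the boundary curves $\mathbb{S}^1\times\{\pm\rho\}$. *)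

(* Defs.v *)
From Stdlib Require Import Reals Lra.
Open Scope R_scope.

Definition continuous2 (g : R -> R -> R) : Prop :=
  forall x y eps, 0 < eps -> exists delta, 0 < delta /\
    forall x' y', Rabs (x' - x) < delta -> Rabs (y' - y) < delta ->
      Rabs (g x' y' - g x y) < eps.

Fixpoint Ck2 (k : nat) (g : R -> R -> R) : Prop :=
  match k with
  | O => continuous2 g
  | S k' => continuous2 g /\
      exists g1 g2 : R -> R -> R,
        (forall x y, derivable_pt_lim (fun t => g t y) x (g1 x y)) /\
        (forall x y, derivable_pt_lim (fun t => g x t) y (g2 x y)) /\
        Ck2 k' g1 /\ Ck2 k' g2
  end.

Definition smooth2 (g : R -> R -> R) : Prop := forall k, Ck2 k g.

(* For the metric ds^2 = dsigma^2 + f(theta,sigma)^2 dtheta^2, given the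
   sigma-partials fs = df/dsigma and fss = d^2 f/dsigma^2:
   scalar curvature R = 2K = -2 f_{sigma sigma} / f,
   geodesic curvature of the parallels sigma = const: k_g = f_sigma / f
   (up to orientation sign, irrelevant since only |k_g| is used). *)
Definition scalar_curv (f fss : R -> R -> R) (th sg : R) : R :=
  -2 * fss th sg / f th sg.

Definition geod_curv (f fs : R -> R -> R) (th sg : R) : R :=
  fs th sg / f th sg.

(* Main.v *)
Require Import Defs.
From Stdlib Require Import Reals Lra.
Open Scope R_scope.

Lemma abs_betw (x c : R) : Rabs x <= c -> -c <= x <= c.
Proof. intros H. unfold Rabs in H. destruct (Rcase_abs x); lra. Qed.

Lemma mvt_bound (h h' : R -> R) (a b M : R) :
  (forall c, a <= c <= b -> derivable_pt_lim h c (h' c)) ->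
  (forall c, a <= c <= b -> h' c <= M) ->
  forall x y, a <= x -> x <= y -> y <= b -> h y - h x <= M * (y - x).
Proof.
  intros Hd Hb x y Hx Hxy Hy.
  destruct (Req_dec x y) as [E|NE]. { subst; lra. }
  destruct (MVT_cor2 h h' x y) as [c [Hc1 Hc2]]; [lra| |].
  { intros c Hc; apply Hd; lra. }
  rewrite Hc1. apply Rmult_le_compat_r; [lra|]. apply Hb; lra.
Qed.

Lemma mvt_lbound (h h' : R -> R) (a b M : R) :
  (forall c, a <= c <= b -> derivable_pt_lim h c (h' c)) ->
  (forall c, a <= c <= b -> - M <= h' c) ->
  forall x y, a <= x -> x <= y -> y <= b -> - M * (y - x) <= h y - h x.
Proof.
  intros Hd Hb x y Hx Hxy Hy.
  destruct (Req_dec x y) as [E|NE]. { subst; lra. }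
  destruct (MVT_cor2 h h' x y) as [c [Hc1 Hc2]]; [lra| |].
  { intros c Hc; apply Hd; lra. }
  rewrite Hc1. apply Rmult_le_compat_r; [lra|]. apply Hb; lra.
Qed.

Lemma pointwise (rho alpha C : R) (g g1 g2 : R -> R)
  (hrho : 0 < rho) (halpha : 0 < alpha) (hC : 0 <= C)
  (hpos : forall sg, -rho <= sg <= rho -> 0 < g sg)
  (h1 : forall sg, derivable_pt_lim g sg (g1 sg))
  (h2 : forall sg, derivable_pt_lim g1 sg (g2 sg))
  (hR : forall sg, -rho <= sg <= rho -> -2 * g2 sg / g sg >= - alpha)
  (hk1 : Rabs (g1 rho / g rho) <= C) (hk2 : Rabs (g1 (-rho) / g (-rho)) <= C) :
  forall s q, -rho <= s <= rho -> -rho <= q <= rho ->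
  ln (g q) - ln (g s) <= 2 * rho * (alpha * rho + C).
Proof.
  set (u := fun t => g1 t / g t).
  set (u' := fun t => (g2 t * g t - g1 t * g1 t) / (g t)²).
  assert (Hu : forall c, -rho <= c <= rho -> derivable_pt_lim u c (u' c)).
  { intros c Hc. unfold u, u'.
    pose proof (derivable_pt_lim_div g1 g c _ _ (h2 c) (h1 c)) as H.
    assert (g c <> 0) by (pose proof (hpos c Hc); lra).
    specialize (H H0). unfold div_fct in H.
    replace ((g2 c * g c - g1 c * g1 c) / (g c)²) with
      ((g2 c * g c - g1 c * g1 c) / (g c)²) by reflexivity.
    exact H. }
  assert (Hu'b : forall c, -rho <= c <= rho -> u' c <= alpha / 2).
  { intros c Hc. unfold u'. pose proof (hpos c Hc) as Hg.
    pose proof (hR c Hc) as HR.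
    assert (g2 c / g c <= alpha / 2) by lra.
    assert (g2 c <= alpha / 2 * g c).
    { apply (Rmult_le_compat_r (g c)) in H; [|lra].
      unfold Rdiv in H. rewrite Rmult_assoc, Rinv_l in H; lra. }
    unfold Rsqr. apply (Rmult_le_reg_r (g c * g c)). nra.
    unfold Rdiv. rewrite Rmult_assoc, Rinv_l by nra. nra. }
  assert (Hub : forall c, -rho <= c <= rho -> Rabs (u c) <= alpha * rho + C).
  { intros c Hc.
    pose proof (mvt_bound u u' (-rho) rho (alpha/2) Hu Hu'b (-rho) c ltac:(lra) ltac:(lra) ltac:(lra)).
    pose proof (mvt_bound u u' (-rho) rho (alpha/2) Hu Hu'b c rho ltac:(lra) ltac:(lra) ltac:(lra)).
    unfold u in *. apply Rabs_le. apply abs_betw in hk1.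
    apply abs_betw in hk2. split; nra. }
  set (h := fun t => ln (g t)).
  assert (Hh : forall c, -rho <= c <= rho -> derivable_pt_lim h c (u c)).
  { intros c Hc. unfold h, u.
    pose proof (derivable_pt_lim_comp g ln c _ _ (h1 c) (derivable_pt_lim_ln _ (hpos c Hc))) as H.
    unfold comp in H. replace (g1 c / g c) with (/ g c * g1 c) by (unfold Rdiv; ring).
    exact H. }
  set (K := alpha * rho + C).
  assert (Hup : forall c, -rho <= c <= rho -> u c <= K).
  { intros c Hc; pose proof (Hub c Hc); apply abs_betw in H; unfold K; lra. }
  assert (Hlo : forall c, -rho <= c <= rho -> - K <= u c).
  { intros c Hc; pose proof (Hub c Hc); apply abs_betw in H; unfold K; lra. }
  assert (HK : 0 <= K) by (unfold K; nra).
  intros s q Hs Hq. fold (h q) (h s).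
  destruct (Rle_dec s q).
  - pose proof (mvt_bound h u (-rho) rho K Hh Hup s q ltac:(lra) ltac:(lra) ltac:(lra)). nra.
  - pose proof (mvt_lbound h u (-rho) rho K Hh Hlo q s ltac:(lra) ltac:(lra) ltac:(lra)). nra.
Qed.
Theorem lemma2p2
  (rho alpha C : R) (f fs fss : R -> R -> R)
  (hrho : 0 < rho) (halpha : 0 < alpha) (hC : 0 <= C)
  (hsmooth : smooth2 f)
  (hper : forall th sg, f (th + 2 * PI) sg = f th sg)
  (hpos : forall th sg, -rho <= sg <= rho -> 0 < f th sg)
  (hfs : forall th sg, derivable_pt_lim (fun t => f th t) sg (fs th sg))
  (hfss : forall th sg, derivable_pt_lim (fun t => fs th t) sg (fss th sg))
  (hR : forall th sg, -rho <= sg <= rho -> scalar_curv f fss th sg >= - alpha)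
  (hkg : forall th, Rabs (geod_curv f fs th rho) <= C /\
                    Rabs (geod_curv f fs th (- rho)) <= C) :
  forall s q, -rho <= s <= rho -> -rho <= q <= rho ->
  forall (pr_s : Riemann_integrable (fun th => f th s) 0 (2 * PI))
         (pr_q : Riemann_integrable (fun th => f th q) 0 (2 * PI)),
    RiemannInt pr_s * exp (- (2 * rho * (alpha * rho + C))) <= RiemannInt pr_q /\
    RiemannInt pr_q <= RiemannInt pr_s * exp (2 * rho * (alpha * rho + C)).
Proof.
  intros s q Hs Hq pr_s pr_q.
  set (K := 2 * rho * (alpha * rho + C)).
  assert (Hpt : forall th a b, -rho <= a <= rho -> -rho <= b <= rho ->
            f th b <= f th a * exp K).
  { intros th a b Ha Hb.
    assert (Hl : ln (f th b) - ln (f th a) <= K).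
    { apply (pointwise rho alpha C (fun t => f th t) (fs th) (fss th)); auto.
      - intros sg Hsg; unfold scalar_curv in hR; apply hR; auto.
      - apply (hkg th).
      - apply (hkg th). }
    pose proof (hpos th a Ha). pose proof (hpos th b Hb).
    assert (exp (ln (f th b)) <= exp (ln (f th a) + K)).
    { destruct (Req_dec (ln (f th b)) (ln (f th a) + K)) as [E|E];
      [rewrite E; lra | left; apply exp_increasing; lra]. }
    rewrite exp_plus, !exp_ln in H1 by lra. exact H1. }
  assert (HPI : 0 <= 2 * PI) by (pose proof PI_RGT_0; lra).
  split.
  - pose (p3 := RiemannInt_P10 (exp (-K) - 1) pr_s pr_s).
    pose proof (RiemannInt_P19 p3 pr_q HPI) as H.
    pose proof (RiemannInt_P12 pr_s pr_s p3 HPI) as E. cbv beta in E, H. rewrite E in H.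
    assert (RiemannInt pr_s + (exp (- K) - 1) * RiemannInt pr_s <= RiemannInt pr_q).
    { apply H. intros x _.
      pose proof (Hpt x q s Hq Hs).
      pose proof (exp_pos (-K)).
      apply (Rmult_le_compat_r (exp (-K))) in H0; [|lra].
      rewrite Rmult_assoc, <- exp_plus, Rplus_opp_r, exp_0 in H0. lra. }
    lra.
  - pose (p3 := RiemannInt_P10 (exp K - 1) pr_s pr_s).
    pose proof (RiemannInt_P19 pr_q p3 HPI) as H.
    pose proof (RiemannInt_P12 pr_s pr_s p3 HPI) as E. cbv beta in E, H. rewrite E in H.
    assert (RiemannInt pr_q <= RiemannInt pr_s + (exp K - 1) * RiemannInt pr_s).
    { apply H. intros x _. pose proof (Hpt x s q Hs Hq). lra. }
    lra.
Qed.
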